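(* Let $p:[0,\infty)\to\mathbb{R}$ be a non-increasing pricing function. Then the set of buyer types $$\Big\{(\theta,v)\ \Big|\ \min_{t\ge 0}\{p(t)+\theta t\}> v\Big\}$$ (the types who do not buy the item, whatever time they spend) is a convex subset of $\mathbb{R}^2$.
   Context: Model: a seller sells identical items in unlimited supply to unit-demand buyers. A buyer's type is $(\theta,v)$, where $\theta\ge 0$ is her cost per unit time (CPUT) and $v$ her valuation for the item. The seller posts a non-increasing pricing function $p$: a buyer who spends time $t\ge 0$ on the deal pays $p(t)$. A buyer of type $(\theta,v)$ buys the item iff $\min_{t\ge 0}\{p(t)+\theta t\}\le v$, where the minimum is taken to exist, as the model assumes when it defines the set $\arg\min_{t\ge 0}\{p(t)+\theta t\}$ of the buyer's best actions. *)

(* Defs.v *)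
From Stdlib Require Import Reals.
Open Scope R_scope.

Definition nonincreasing_on_nonneg (p : R -> R) : Prop :=
  forall s t, 0 <= s -> s <= t -> p t <= p s.

Definition is_min_cost (p : R -> R) (theta m : R) : Prop :=
  (exists t0, 0 <= t0 /\ p t0 + theta * t0 = m) /\
  (forall t, 0 <= t -> m <= p t + theta * t).

Definition non_buyers (p : R -> R) : R * R -> Prop :=
  fun x => 0 <= fst x /\ exists m, is_min_cost p (fst x) m /\ m > snd x.

Definition convex_R2 (S : R * R -> Prop) : Prop :=
  forall x y lam, S x -> S y -> 0 <= lam <= 1 ->
    S (lam * fst x + (1 - lam) * fst y, lam * snd x + (1 - lam) * snd y).

(* Main.v *)
Require Import Defs.
From Stdlib Require Import Reals Lra Psatz.
Open Scope R_scope.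

Theorem lemma1 (p : R -> R)
  (hp : nonincreasing_on_nonneg p)
  (hmin : forall theta, 0 <= theta -> exists m, is_min_cost p theta m) :
  convex_R2 (non_buyers p).
Proof.
  intros [tx vx] [ty vy] lam [Hx [mx [[_ Mx] Gx]]] [Hy [my [[_ My] Gy]]] Hl.
  simpl in *.
  assert (Hz : 0 <= lam * tx + (1 - lam) * ty) by nra.
  split; [simpl; exact Hz|].
  destruct (hmin _ Hz) as [mz [[t0 [Ht0 E]] Mz]].
  exists mz; split; [split; [exists t0; split; assumption | exact Mz]|].
  simpl.
  specialize (Mx t0 Ht0). specialize (My t0 Ht0).
  assert (mz = lam * (p t0 + tx * t0) + (1 - lam) * (p t0 + ty * t0)) by (rewrite <- E; ring).
  destruct (Rle_lt_dec lam 0); [assert (lam = 0) by lra; subst lam; lra | nra].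
Qed.
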